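(* Every critical model (of degree $2$, $3$ or $4$) is insoluble over $K$, i.e. the curve it defines has no $K$-rational point.
   Context: $K$ is a field with normalised discrete valuation $v$, valuation ring $\mathcal{O}_K$, uniformiser $\pi$, perfect residue field $k$. Critical models: (a) A generalised binary quartic $y^2+(lx^2+mxz+nz^2)y=ax^4+bx^3z+cx^2z^2+dxz^3+ez^4$ with coefficients in $\mathcal{O}_K$ is critical if $v(l)\ge1$, $v(m)\ge1$, $v(n)\ge2$, $v(a)=1$, $v(b)\ge2$, $v(c)\ge2$, $v(d)\ge3$, $v(e)=3$; its curve lies in the weighted projective plane $\mathbb{P}(1,1,2)$ with coordinates $x,z,y$. (b) A ternary cubic $F\in\mathcal{O}_K[x,y,z]$ is critical if its coefficients satisfy: $v(x^3)=0$, $v(x^2y)\ge1$, $v(xy^2)\ge1$, $v(y^3)=1$, $v(x^2z)\ge1$, $v(xyz)\ge1$, $v(y^2z)\ge2$, $v(xz^2)\ge2$, $v(yz^2)\ge2$, $v(z^3)=2$ (where $v(\text{monomial})$ denotes the valuation of its coefficient); its curve is $\{F=0\}\subset\mathbb{P}^2$. (c) A pair $(Q_1,Q_2)$ of quadratic forms in $x_1,\dots,x_4$ over $\mathcal{O}_K$ is critical if the reductions of $Q_1,Q_2$ mod $\pi$ are quadratic forms in $x_1,x_2$ only with no common root in $\mathbb{P}^1(\overline{k})$, and, putting $R_i(x_1,\dots,x_4)=\pi^{-1}Q_i(\pi x_1,\pi x_2,x_3,x_4)$, the reductions of $R_1,R_2$ mod $\pi$ are quadratic forms in $x_3,x_4$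 only with no common root in $\mathbb{P}^1(\overline{k})$; its curve is $\{Q_1=Q_2=0\}\subset\mathbb{P}^3$. *)

(* Defs.v *)
From HB Require Import structures.
From mathcomp Require Import all_boot all_order all_algebra.
Set Implicit Arguments. Unset Strict Implicit. Unset Printing Implicit Defensive.
Import Order.TTheory GRing.Theory Num.Theory.
Local Open Scope ring_scope.

(* A discrete valuation on K is a map v : K -> int, only meaningful on
   nonzero elements (v 0 = +oo by convention, encoded by the predicates below). *)
Section Val.
Variable K : fieldType.
Variable v : K -> int.

(* v is a normalised discrete valuation: multiplicative, ultrametric,
   and takes the value 1 (hence its value group is exactly Z). *)
Definition is_normalised_discrete_valuation : Prop :=
  [/\ forall x y : K, x != 0 -> y != 0 -> v (x * y) = v x + v y,
      forall x y : K, x != 0 -> y != 0 -> x + y != 0 ->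
        Num.min (v x) (v y) <= v (x + y)
    & exists x : K, x != 0 /\ v x = 1].

Definition vge (x : K) (n : int) : Prop := x = 0 \/ n <= v x.
Definition veq (x : K) (n : int) : Prop := x != 0 /\ v x = n.
Definition integral (x : K) : Prop := vge x 0.

(* Perfect residue field: if the residue characteristic is a prime p
   (i.e. p lies in the maximal ideal), Frobenius is surjective on k. *)
Definition perfect_residue_field : Prop :=
  forall p : nat, prime p -> vge (p%:R) 1 ->
    forall x, integral x -> exists y, integral y /\ vge (y ^+ p - x) 1.

(* r : K -> L induces, on O_K, a ring morphism O_K -> L with kernel the
   maximal ideal, i.e. an embedding of the residue field k into L. *)
Definition residue_map (L : fieldType) (r : K -> L) : Prop :=
  [/\ (forall x y, integral x -> integral y -> r (x + y) = r x + r y),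
      (forall x y, integral x -> integral y -> r (x * y) = r x * r y),
      r 1 = 1
    & (forall x, integral x -> (r x = 0 <-> vge x 1))].

(* The reductions mod pi of the binary quadratic forms
   a1 s^2 + b1 s t + c1 t^2 and a2 s^2 + b2 s t + c2 t^2 (integral coefficients)
   have no common root in P^1(kbar): for every algebraically closed field L
   containing k, there is no common zero (s:t) in P^1(L). *)
Definition no_common_root (a1 b1 c1 a2 b2 c2 : K) : Prop :=
  forall (L : closedFieldType) (r : K -> L), residue_map r ->
    forall s t : L, (s, t) != (0, 0) ->
      ~ (r a1 * s ^+ 2 + r b1 * s * t + r c1 * t ^+ 2 = 0 /\
         r a2 * s ^+ 2 + r b2 * s * t + r c2 * t ^+ 2 = 0).

Definition critical_quartic (l m n a b c d e : K) : Prop :=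
  [/\ vge l 1, vge m 1 & vge n 2] /\
  [/\ veq a 1, vge b 2, vge c 2, vge d 3 & veq e 3].

(* K-rational point of the quartic model in P(1,1,2) (coordinates x,z,y) *)
Definition quartic_has_point (l m n a b c d e : K) : Prop :=
  exists x z y : K, (x, z, y) != (0, 0, 0) /\
    y ^+ 2 + (l * x ^+ 2 + m * x * z + n * z ^+ 2) * y =
    a * x ^+ 4 + b * x ^+ 3 * z + c * x ^+ 2 * z ^+ 2 + d * x * z ^+ 3 + e * z ^+ 4.

Definition cubic_eval (c300 c210 c120 c030 c201 c111 c021 c102 c012 c003 : K)
  (x y z : K) : K :=
  c300 * x ^+ 3 + c210 * x ^+ 2 * y + c120 * x * y ^+ 2 + c030 * y ^+ 3
  + c201 * x ^+ 2 * z + c111 * x * y * z + c021 * y ^+ 2 * z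
  + c102 * x * z ^+ 2 + c012 * y * z ^+ 2 + c003 * z ^+ 3.

Definition critical_cubic (c300 c210 c120 c030 c201 c111 c021 c102 c012 c003 : K)
  : Prop :=
  [/\ veq c300 0, vge c210 1, vge c120 1 & veq c030 1] /\
  [/\ vge c201 1, vge c111 1 & vge c021 2] /\
  [/\ vge c102 2, vge c012 2 & veq c003 2].

Definition cubic_has_point (c300 c210 c120 c030 c201 c111 c021 c102 c012 c003 : K)
  : Prop :=
  exists x y z : K, (x, y, z) != (0, 0, 0) /\
    cubic_eval c300 c210 c120 c030 c201 c111 c021 c102 c012 c003 x y z = 0.

(* (c) quadratic forms in x_1..x_4 (indices 0..3 : 'I_4), given by the
   coefficient c i j of the monomial x_i x_j for i <= j (entries with i > j
   are ignored). *)
Definition qform (c : 'I_4 -> 'I_4 -> K) (x : 'I_4 -> K) : K :=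
  \sum_(i < 4) \sum_(j < 4 | (i <= j)%N) c i j * x i * x j.

(* Coefficients of R(x) = pi^-1 Q(pi x_1, pi x_2, x_3, x_4). *)
Definition Rcoef (pi : K) (c : 'I_4 -> 'I_4 -> K) (i j : 'I_4) : K :=
  if (j < 2)%N then pi * c i j
  else if (i < 2)%N then c i j
  else c i j / pi.

(* reduction mod pi of the form with coefficients c is a quadratic form in
   x_1, x_2 only: all coefficients integral, those of monomials involving
   x_3 or x_4 in the maximal ideal *)
Definition reduces_in_x12 (c : 'I_4 -> 'I_4 -> K) : Prop :=
  forall i j : 'I_4, (i <= j)%N ->
    integral (c i j) /\ ((2 <= j)%N -> vge (c i j) 1).

(* reduction mod pi is a quadratic form in x_3, x_4 only *)
Definition reduces_in_x34 (c : 'I_4 -> 'I_4 -> K) : Prop :=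
  forall i j : 'I_4, (i <= j)%N ->
    integral (c i j) /\ ((i < 2)%N -> vge (c i j) 1).

Definition i0 : 'I_4 := @Ordinal 4 0 isT.
Definition i1 : 'I_4 := @Ordinal 4 1 isT.
Definition i2 : 'I_4 := @Ordinal 4 2 isT.
Definition i3 : 'I_4 := @Ordinal 4 3 isT.

Definition critical_pair (pi : K) (c1 c2 : 'I_4 -> 'I_4 -> K) : Prop :=
  [/\ reduces_in_x12 c1, reduces_in_x12 c2
    & no_common_root (c1 i0 i0) (c1 i0 i1) (c1 i1 i1)
                     (c2 i0 i0) (c2 i0 i1) (c2 i1 i1)] /\
  [/\ reduces_in_x34 (Rcoef pi c1), reduces_in_x34 (Rcoef pi c2)
    & no_common_root (Rcoef pi c1 i2 i2) (Rcoef pi c1 i2 i3) (Rcoef pi c1 i3 i3)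
                     (Rcoef pi c2 i2 i2) (Rcoef pi c2 i2 i3) (Rcoef pi c2 i3 i3)].

Definition pair_has_point (c1 c2 : 'I_4 -> 'I_4 -> K) : Prop :=
  exists x : 'I_4 -> K, (exists i, x i != 0) /\ qform c1 x = 0 /\ qform c2 x = 0.

End Val.

(* Main.v *)
Require Import Defs.
From HB Require Import structures.
From mathcomp Require Import all_boot all_order all_algebra all_field.
From mathcomp Require Import boolp classical_sets filter.
From mathcomp Require Import zify ring lra.
Set Implicit Arguments. Unset Strict Implicit. Unset Printing Implicit Defensive.
Import Order.TTheory GRing.Theory Num.Theory.
Local Open Scope ring_scope.

Section V.
Variable K : fieldType.
Variable v : K -> int.
Hypothesis hv : is_normalised_discrete_valuation v.

Lemma vM (x y : K) : x != 0 -> y != 0 -> v (x * y) = v x + v y.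
Proof. by case: hv => h _ _; apply: h. Qed.

Lemma v1 : v 1 = 0.
Proof.
have h := vM (oner_neq0 K) (oner_neq0 K); rewrite mulr1 in h.
apply/esym/(@addrI _ (v 1)); rewrite addr0; exact: h.
Qed.

Lemma vNone : v (-1) = 0.
Proof.
have n1 : (-1 : K) != 0 by rewrite oppr_eq0 oner_neq0.
have := vM n1 n1; rewrite mulrNN mulr1 v1 => h; lia.
Qed.

Lemma vN (x : K) : v (- x) = v x.
Proof.
have [->|x0] := eqVneq x 0; first by rewrite oppr0.
have n1 : (-1 : K) != 0 by rewrite oppr_eq0 oner_neq0.
by rewrite -mulN1r vM // vNone add0r.
Qed.

Lemma vV (x : K) : x != 0 -> v (x^-1) = - v x.
Proof.
move=> x0; have := vM x0 (invr_neq0 x0); rewrite mulfV // v1 => h; lia.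
Qed.

Lemma vX (x : K) n : x != 0 -> v (x ^+ n) = v x *+ n.
Proof.
move=> x0; elim: n => [|n IH]; first by rewrite expr0 v1.
by rewrite exprS vM ?expf_neq0 // IH mulrS.
Qed.

Lemma vgeD (x y : K) n : vge v x n -> vge v y n -> vge v (x + y) n.
Proof.
case=> [->|hx]; first by rewrite add0r.
case=> [->|hy]; first by rewrite addr0; right.
have [xy0|xy0] := eqVneq (x + y) 0; first by left.
have [x0|x0] := eqVneq x 0; first by rewrite x0 add0r; right.
have [y0|y0] := eqVneq y 0; first by rewrite y0 addr0; right.
right; case: hv => _ h _; apply: le_trans (h _ _ x0 y0 xy0).
by rewrite le_min hx hy.
Qed.

Lemma vgeN (x : K) n : vge v x n -> vge v (- x) n.
Proof. by case=> [->|h]; [rewrite oppr0; left|right; rewrite vN]. Qed.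

Lemma vgeB (x y : K) n : vge v x n -> vge v y n -> vge v (x - y) n.
Proof. by move=> hx hy; apply: vgeD hx (vgeN hy). Qed.

Lemma vgeM (x y : K) m n : vge v x m -> vge v y n -> vge v (x * y) (m + n).
Proof.
case=> [->|hx]; first by rewrite mul0r; left.
case=> [->|hy]; first by rewrite mulr0; left.
have [x0|x0] := eqVneq x 0; first by rewrite x0 mul0r; left.
have [y0|y0] := eqVneq y 0; first by rewrite y0 mulr0; left.
by right; rewrite vM // lerD.
Qed.

Lemma vge_le (x : K) m n : m <= n -> vge v x n -> vge v x m.
Proof. by move=> mn [->|h]; [left|right; apply: le_trans h]. Qed.

Lemma vge0 n : vge v 0 n. Proof. by left. Qed.

Lemma veq_vge (x : K) n : veq v x n -> vge v x n.
Proof. by case=> _ <-; right. Qed.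

Lemma veq_neq0 (x : K) n : veq v x n -> x != 0.
Proof. by case. Qed.

Lemma veqM (x y : K) m n : veq v x m -> veq v y n -> veq v (x * y) (m + n).
Proof. by case=> x0 <- [y0 <-]; split; [rewrite mulf_neq0|rewrite vM]. Qed.

Lemma veq_nvge (x : K) n m : veq v x n -> vge v x m -> m <= n.
Proof. by case=> x0 <- [x00|//]; rewrite x00 eqxx in x0. Qed.

Lemma veqD (x y : K) n : veq v x n -> vge v y (n + 1) -> veq v (x + y) n.
Proof.
move=> hx hy.
have xy0 : x + y != 0.
  apply/eqP=> e; have ey : y = - x by rewrite -(addKr x y) e addr0.
  case: hx => x0 vx.
  have h : veq v (- x) n by split; rewrite ?oppr_eq0 ?vN.
  rewrite ey in hy; have := veq_nvge h hy; lia.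
split=> //.
have h1 : vge v (x + y) n by apply: vgeD (veq_vge hx) (vge_le _ hy); lia.
have h2 : ~ vge v (x + y) (n + 1).
  move=> h; have : vge v x (n + 1).
    by have := vgeB h hy; rewrite addrK.
  by move/(veq_nvge hx); lia.
case: h1 => [e|h]; first by rewrite e eqxx in xy0.
apply/eqP; rewrite eq_le h andbT; apply/negP => /negP; rewrite -ltNge => lt.
by apply: h2; right; lia.
Qed.

Lemma veqX (x : K) n k : veq v x n -> veq v (x ^+ k) (n *+ k).
Proof. by case=> x0 <-; split; rewrite ?expf_neq0 ?vX. Qed.

Lemma vgeX (x : K) n k : vge v x n -> vge v (x ^+ k) (n *+ k).
Proof.
move=> h; elim: k => [|k IH]; first by right; rewrite expr0 v1.
by rewrite exprS mulrS; apply: vgeM.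
Qed.

Lemma veq_dich (x : K) : x != 0 -> veq v x (v x).
Proof. by move=> x0; split. Qed.

Lemma integral_dich (x : K) : integral v x -> veq v x 0 \/ vge v x 1.
Proof.
case=> [->|h]; first by right; left.
have [x0|x0] := eqVneq x 0; first by right; left.
have [e|ne] := eqVneq (v x) 0; first by left; split.
by right; right; lia.
Qed.

Lemma exists_val (n : int) : exists c : K, veq v c n.
Proof.
case: hv => _ _ [p [p0 vp]].
case: n => m.
  exists (p ^+ m); split; first by rewrite expf_neq0.
  by rewrite vX // vp; lia.
exists ((p^-1) ^+ m.+1); split; first by rewrite expf_neq0 // invr_eq0.
rewrite vX ?invr_eq0 // vV // vp NegzE.
lia.
Qed.

Lemma min_val (s : seq K) : has (fun x => x != 0) s ->
  exists m : int, (exists2 x, x \in s & veq v x m) /\ (forall y, y \in s -> vge v y m).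
Proof.
elim: s => [//|a s IH] /=.
have [a0|a0] /= := eqVneq a 0.
  move=> /IH [m [[x xs hx] hall]]; exists m; split.
    by exists x => //; rewrite inE xs orbT.
  by move=> y; rewrite inE => /orP[/eqP->|/hall//]; rewrite a0; left.
case hs: (has (fun x => x != 0) s) => _.
  have [m [[x xs hx] hall]] := IH hs.
  have [le|lt] := leP m (v a).
    exists m; split; first by exists x => //; rewrite inE xs orbT.
    by move=> y; rewrite inE => /orP[/eqP->|/hall//]; right.
  exists (v a); split; first by exists a; rewrite ?inE ?eqxx //; split.
  move=> y; rewrite inE => /orP[/eqP->|/hall]; first by right.
  by apply: vge_le; apply: ltW.
exists (v a); split; first by exists a; rewrite ?inE ?eqxx //; split.
move=> y; rewrite inE => /orP[/eqP->|ys]; first by right.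
left; apply/eqP; apply/negPn; move/negbT: hs => /hasPn /(_ _ ys).
done.
Qed.

Lemma scaling (s : seq K) : has (fun x => x != 0) s ->
  exists c : K, c != 0 /\ (exists2 x, x \in s & veq v (c * x) 0) /\
    (forall y, y \in s -> integral v (c * y)).
Proof.
move=> /min_val [m [[x xs hx] hall]].
have [c hc] := exists_val (- m).
exists c; split; first exact: veq_neq0 hc.
split; first by exists x => //; have := veqM hc hx; rewrite addNr.
move=> y /hall hy; rewrite /integral.
by have := vgeM (veq_vge hc) hy; rewrite addNr.
Qed.

End V.


Section PA.
Variable K : fieldType.
Variable v : K -> int.
Hypothesis hv : is_normalised_discrete_valuation v.

Lemma vge_le' (x : K) m n : vge v x n -> m <= n -> vge v x m.
Proof. by move=> h mn; apply: vge_le mn h. Qed.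
Lemma vgeM' (x y : K) (m n k : int) : vge v x m -> vge v y n -> k <= m + n -> vge v (x * y) k.
Proof. by move=> hx hy le; apply: vge_le' (vgeM hv hx hy) le. Qed.
Lemma vgeX' (x : K) (n : int) (k : nat) (j : int) : vge v x n -> j <= n *+ k -> vge v (x ^+ k) j.
Proof. by move=> hx le; apply: vge_le' (vgeX hv k hx) le. Qed.
Lemma veqM' (x y : K) (m n k : int) : veq v x m -> veq v y n -> m + n = k -> veq v (x * y) k.
Proof. move=> hx hy <-; exact: (veqM hv hx hy). Qed.
Lemma veqX' (x : K) (n : int) (k : nat) (j : int) : veq v x n -> n *+ k = j -> veq v (x ^+ k) j.
Proof. by move=> hx <-; exact: (veqX hv k hx). Qed.
Lemma veqD' (x y : K) n : veq v x n -> vge v y (n + 1) -> veq v (x + y) n.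
Proof. move=> h1 h2. exact: (veqD hv h1 h2). Qed.
Lemma veq_uniq (x : K) m n : veq v x m -> veq v x n -> m = n.
Proof. by case=> _ <- [_ <-]. Qed.

End PA.

Ltac vatom :=
  first [ eassumption | apply: veq_vge; eassumption ].

Ltac vg :=
  lazymatch goal with
  | |- vge ?v ?x ?k =>
    first [ tryif is_evar k then vatom else (eapply vge_le'; [vatom|lia])
          | lazymatch goal with
  | |- vge ?v (_ + _) ?k => apply: vgeD; [assumption| vg | vg]
  | |- vge ?v (- _) ?k => apply: vgeN; [assumption|vg]
  | |- vge ?v (_ * _) ?k =>
      tryif is_evar k then (apply: vgeM; [assumption|vg|vg])
      else (eapply vgeM'; [assumption|vg|vg|lia])
  | |- vge ?v (_ ^+ _) ?k =>
      tryif is_evar k then (apply: vgeX; [assumption|vg])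
      else (eapply vgeX'; [assumption|vg|lia])
  end ]
  end.

Section PA2.
Variable K : fieldType.
Variable v : K -> int.
Hypothesis hv : is_normalised_discrete_valuation v.

Lemma quartic_core (l m n a b c d e x z y : K) :
  critical_quartic v l m n a b c d e -> integral v x -> integral v z ->
  veq v x 0 \/ veq v z 0 ->
  y ^+ 2 + (l * x ^+ 2 + m * x * z + n * z ^+ 2) * y =
    a * x ^+ 4 + b * x ^+ 3 * z + c * x ^+ 2 * z ^+ 2 + d * x * z ^+ 3 + e * z ^+ 4 ->
  False.
Proof.
move=> [[hl hm hn] [ha hb hc hd he]]; rewrite /integral => ix iz hxz E.
have caseA : veq v x 0 -> False.
  move=> hx.
  have eR : a * x ^+ 4 + b * x ^+ 3 * z + c * x ^+ 2 * z ^+ 2 + d * x * z ^+ 3 + e * z ^+ 4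
     = a * x ^+ 4 + (b * x ^+ 3 * z + c * x ^+ 2 * z ^+ 2 + d * x * z ^+ 3 + e * z ^+ 4)
     by ring.
  rewrite eR in E.
  have hR : veq v (a * x ^+ 4 + (b * x ^+ 3 * z + c * x ^+ 2 * z ^+ 2 + d * x * z ^+ 3 + e * z ^+ 4)) 1.
    apply: (veqD' hv).
      eapply veqM'; [exact hv|exact ha|eapply veqX'; [exact hv|exact hx|reflexivity]|lia].
    vg.
  rewrite -E in hR.
  have [y0|y0] := eqVneq y 0.
    by move: hR; rewrite y0 expr0n mulr0 addr0 /veq eqxx; case.
  have hy : veq v y (v y) by split.
  have [w0|w1] := lerP (v y) 0.
    have hL : veq v (y ^+ 2 + (l * x ^+ 2 + m * x * z + n * z ^+ 2) * y) (v y *+ 2).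
      apply: (veqD' hv); first by eapply veqX'; [exact hv|exact hy|reflexivity].
      vg.
    have := veq_uniq hL hR; lia.
  have hL : vge v (y ^+ 2 + (l * x ^+ 2 + m * x * z + n * z ^+ 2) * y) 2 by vg.
  have := veq_nvge hR hL; lia.
case: hxz => [//|hz].
have [hx|hx] := integral_dich ix; first exact: caseA.
clear ix.
have eR : a * x ^+ 4 + b * x ^+ 3 * z + c * x ^+ 2 * z ^+ 2 + d * x * z ^+ 3 + e * z ^+ 4
   = e * z ^+ 4 + (a * x ^+ 4 + b * x ^+ 3 * z + c * x ^+ 2 * z ^+ 2 + d * x * z ^+ 3)
   by ring.
rewrite eR in E.
have hR : veq v (e * z ^+ 4 + (a * x ^+ 4 + b * x ^+ 3 * z + c * x ^+ 2 * z ^+ 2 + d * x * z ^+ 3)) 3.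
  apply: (veqD' hv).
    eapply veqM'; [exact hv|exact he|eapply veqX'; [exact hv|exact hz|reflexivity]|lia].
  vg.
rewrite -E in hR.
have [y0|y0] := eqVneq y 0.
  by move: hR; rewrite y0 expr0n mulr0 addr0 /veq eqxx; case.
have hy : veq v y (v y) by split.
have [w0|w1] := lerP (v y) 1.
  have hQ : vge v (l * x ^+ 2 + m * x * z + n * z ^+ 2) 2 by vg.
  have hL : veq v (y ^+ 2 + (l * x ^+ 2 + m * x * z + n * z ^+ 2) * y) (v y *+ 2).
    apply: (veqD' hv); first by eapply veqX'; [exact hv|exact hy|reflexivity].
    vg.
  have := veq_uniq hL hR; lia.
have hQ : vge v (l * x ^+ 2 + m * x * z + n * z ^+ 2) 2 by vg.
have hL : vge v (y ^+ 2 + (l * x ^+ 2 + m * x * z + n * z ^+ 2) * y) 4 by vg.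
have := veq_nvge hR hL; lia.
Qed.

End PA2.


Section PB.
Variable K : fieldType.
Variable v : K -> int.
Hypothesis hv : is_normalised_discrete_valuation v.

Lemma cubic_core (c300 c210 c120 c030 c201 c111 c021 c102 c012 c003 x y z : K) :
  critical_cubic v c300 c210 c120 c030 c201 c111 c021 c102 c012 c003 ->
  integral v x -> integral v y -> integral v z ->
  [\/ veq v x 0, veq v y 0 | veq v z 0] ->
  cubic_eval c300 c210 c120 c030 c201 c111 c021 c102 c012 c003 x y z = 0 -> False.
Proof.
move=> [[h300 h210 h120 h030] [[h201 h111 h021] [h102 h012 h003]]].
rewrite /integral => ix iy iz hxyz; rewrite /cubic_eval => E.
have [hx|hx] := integral_dich ix.
  have eR : c300 * x ^+ 3 + c210 * x ^+ 2 * y + c120 * x * y ^+ 2 + c030 * y ^+ 3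
  + c201 * x ^+ 2 * z + c111 * x * y * z + c021 * y ^+ 2 * z
  + c102 * x * z ^+ 2 + c012 * y * z ^+ 2 + c003 * z ^+ 3 =
   c300 * x ^+ 3 + (c210 * x ^+ 2 * y + c120 * x * y ^+ 2 + c030 * y ^+ 3
  + c201 * x ^+ 2 * z + c111 * x * y * z + c021 * y ^+ 2 * z
  + c102 * x * z ^+ 2 + c012 * y * z ^+ 2 + c003 * z ^+ 3) by ring.
  rewrite eR in E.
  have hR : veq v (c300 * x ^+ 3 + (c210 * x ^+ 2 * y + c120 * x * y ^+ 2 + c030 * y ^+ 3
  + c201 * x ^+ 2 * z + c111 * x * y * z + c021 * y ^+ 2 * z
  + c102 * x * z ^+ 2 + c012 * y * z ^+ 2 + c003 * z ^+ 3)) 0.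
    apply: (veqD' hv).
      eapply veqM'; [exact hv|exact h300|eapply veqX'; [exact hv|exact hx|reflexivity]|lia].
    vg.
  by move: hR; rewrite E; case; rewrite eqxx.
clear ix.
have [hy|hy] := integral_dich iy.
  have eR : c300 * x ^+ 3 + c210 * x ^+ 2 * y + c120 * x * y ^+ 2 + c030 * y ^+ 3
  + c201 * x ^+ 2 * z + c111 * x * y * z + c021 * y ^+ 2 * z
  + c102 * x * z ^+ 2 + c012 * y * z ^+ 2 + c003 * z ^+ 3 =
   c030 * y ^+ 3 + (c300 * x ^+ 3 + c210 * x ^+ 2 * y + c120 * x * y ^+ 2
  + c201 * x ^+ 2 * z + c111 * x * y * z + c021 * y ^+ 2 * z
  + c102 * x * z ^+ 2 + c012 * y * z ^+ 2 + c003 * z ^+ 3) by ring.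
  rewrite eR in E.
  have hR : veq v (c030 * y ^+ 3 + (c300 * x ^+ 3 + c210 * x ^+ 2 * y + c120 * x * y ^+ 2
  + c201 * x ^+ 2 * z + c111 * x * y * z + c021 * y ^+ 2 * z
  + c102 * x * z ^+ 2 + c012 * y * z ^+ 2 + c003 * z ^+ 3)) 1.
    apply: (veqD' hv).
      eapply veqM'; [exact hv|exact h030|eapply veqX'; [exact hv|exact hy|reflexivity]|lia].
    vg.
  by move: hR; rewrite E; case; rewrite eqxx.
clear iy.
have hz : veq v z 0.
  case: hxyz => // h.
    by have := veq_nvge h hx; lia.
  by have := veq_nvge h hy; lia.
have eR : c300 * x ^+ 3 + c210 * x ^+ 2 * y + c120 * x * y ^+ 2 + c030 * y ^+ 3
  + c201 * x ^+ 2 * z + c111 * x * y * z + c021 * y ^+ 2 * z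
  + c102 * x * z ^+ 2 + c012 * y * z ^+ 2 + c003 * z ^+ 3 =
   c003 * z ^+ 3 + (c300 * x ^+ 3 + c210 * x ^+ 2 * y + c120 * x * y ^+ 2 + c030 * y ^+ 3
  + c201 * x ^+ 2 * z + c111 * x * y * z + c021 * y ^+ 2 * z
  + c102 * x * z ^+ 2 + c012 * y * z ^+ 2) by ring.
rewrite eR in E.
have hR : veq v (c003 * z ^+ 3 + (c300 * x ^+ 3 + c210 * x ^+ 2 * y + c120 * x * y ^+ 2 + c030 * y ^+ 3
  + c201 * x ^+ 2 * z + c111 * x * y * z + c021 * y ^+ 2 * z
  + c102 * x * z ^+ 2 + c012 * y * z ^+ 2)) 2.
  apply: (veqD' hv).
    eapply veqM'; [exact hv|exact h003|eapply veqX'; [exact hv|exact hz|reflexivity]|lia].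
  vg.
by move: hR; rewrite E; case; rewrite eqxx.
Qed.

End PB.


Lemma qformE (K : fieldType) (c : 'I_4 -> 'I_4 -> K) x : qform c x =
  c i0 i0 * x i0 * x i0 + c i0 i1 * x i0 * x i1 + c i0 i2 * x i0 * x i2 + c i0 i3 * x i0 * x i3
  + (c i1 i1 * x i1 * x i1 + c i1 i2 * x i1 * x i2 + c i1 i3 * x i1 * x i3)
  + (c i2 i2 * x i2 * x i2 + c i2 i3 * x i2 * x i3) + c i3 i3 * x i3 * x i3.
Proof.
rewrite /qform !big_ord_recl big_ord0 /=.
rewrite !big_mkcond /= !big_ord_recl !big_ord0 /=.
rewrite !big_mkcond /= !big_ord_recl !big_ord0 /=.
have e0 : ord0 = i0 :> 'I_4 by apply: val_inj.
have e1 : lift ord0 ord0 = i1 :> 'I_4 by apply: val_inj.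
have e2 : lift ord0 (lift ord0 ord0) = i2 :> 'I_4 by apply: val_inj.
have e3 : lift ord0 (lift ord0 (lift ord0 ord0)) = i3 :> 'I_4 by apply: val_inj.
rewrite !big_mkcond /= !big_ord_recl !big_ord0 /= e3 e2 e1 e0. ring.
Qed.

Lemma ord4_cases (k : 'I_4) : [\/ k = i0, k = i1, k = i2 | k = i3].
Proof.
case: k => [[|[|[|[|//]]]] Hk].
- by constructor 1; apply: val_inj.
- by constructor 2; apply: val_inj.
- by constructor 3; apply: val_inj.
- by constructor 4; apply: val_inj.
Qed.

Section PC.
Variable K : fieldType.
Variable v : K -> int.
Hypothesis hv : is_normalised_discrete_valuation v.
Variable L : closedFieldType.
Variable r : K -> L.
Hypothesis hr : residue_map v r.

Lemma rD a b : integral v a -> integral v b -> r (a + b) = r a + r b.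
Proof. by case: hr => h _ _ _; apply: h. Qed.
Lemma rM a b : integral v a -> integral v b -> r (a * b) = r a * r b.
Proof. by case: hr => _ h _ _; apply: h. Qed.
Lemma r_zero a : integral v a -> vge v a 1 -> r a = 0.
Proof. by case: hr => _ _ _ h ia /(h a ia). Qed.
Lemma r0 : r 0 = 0.
Proof. by apply: r_zero; left. Qed.
Lemma r_neq0 a : veq v a 0 -> r a != 0.
Proof.
move=> ha; apply/eqP; case: hr => _ _ _ h.
have ia : integral v a by apply: veq_vge.
by move/(h a ia) => /(veq_nvge ha); lia.
Qed.
Lemma r_eq0 a : integral v a -> r a = 0 -> vge v a 1.
Proof. by case: hr => _ _ _ h ia /(h a ia). Qed.

Lemma rq (c : 'I_4 -> 'I_4 -> K) (x : 'I_4 -> K) :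
  (forall i j : 'I_4, (i <= j)%N -> integral v (c i j)) ->
  (forall i, integral v (x i)) ->
  r (qform c x) =
  r (c i0 i0) * r (x i0) * r (x i0) + r (c i0 i1) * r (x i0) * r (x i1)
  + r (c i0 i2) * r (x i0) * r (x i2) + r (c i0 i3) * r (x i0) * r (x i3)
  + (r (c i1 i1) * r (x i1) * r (x i1) + r (c i1 i2) * r (x i1) * r (x i2)
     + r (c i1 i3) * r (x i1) * r (x i3))
  + (r (c i2 i2) * r (x i2) * r (x i2) + r (c i2 i3) * r (x i2) * r (x i3))
  + r (c i3 i3) * r (x i3) * r (x i3).
Proof.
move=> hc hx; rewrite qformE.
have h00 : vge v (c i0 i0) 0 by apply: hc.
have h01 : vge v (c i0 i1) 0 by apply: hc.
have h02 : vge v (c i0 i2) 0 by apply: hc.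
have h03 : vge v (c i0 i3) 0 by apply: hc.
have h11 : vge v (c i1 i1) 0 by apply: hc.
have h12 : vge v (c i1 i2) 0 by apply: hc.
have h13 : vge v (c i1 i3) 0 by apply: hc.
have h22 : vge v (c i2 i2) 0 by apply: hc.
have h23 : vge v (c i2 i3) 0 by apply: hc.
have h33 : vge v (c i3 i3) 0 by apply: hc.
have x0 : vge v (x i0) 0 by apply: hx.
have x1 : vge v (x i1) 0 by apply: hx.
have x2 : vge v (x i2) 0 by apply: hx.
have x3 : vge v (x i3) 0 by apply: hx.
do 9 (rewrite rD; [| rewrite /integral; vg | rewrite /integral; vg]).
by do 20 (rewrite rM; [| rewrite /integral; vg | rewrite /integral; vg]).
Qed.

End PC.


Section PC2.
Variable K : fieldType.
Variable v : K -> int.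
Hypothesis hv : is_normalised_discrete_valuation v.

Lemma red12 (L : closedFieldType) (r : K -> L) (hr : residue_map v r)
  (c : 'I_4 -> 'I_4 -> K) (x : 'I_4 -> K) :
  reduces_in_x12 v c -> (forall i, integral v (x i)) -> qform c x = 0 ->
  r (c i0 i0) * r (x i0) ^+ 2 + r (c i0 i1) * r (x i0) * r (x i1)
  + r (c i1 i1) * r (x i1) ^+ 2 = 0.
Proof.
move=> hc hx E.
have hc' : forall i j : 'I_4, (i <= j)%N -> integral v (c i j) by move=> i j /hc [].
have z (i j : 'I_4) : (i <= j)%N -> (2 <= j)%N -> r (c i j) = 0.
  by move=> ij j2; have [ic /(_ j2) h] := hc i j ij; exact: (r_zero hr ic h).
transitivity (r (qform c x)); last by rewrite E (r0 hr).
rewrite (rq hv hr hc' hx) (z i0 i2) // (z i0 i3) // (z i1 i2) // (z i1 i3) //.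
rewrite (z i2 i2) // (z i2 i3) // (z i3 i3) //; ring.
Qed.

Lemma red34 (L : closedFieldType) (r : K -> L) (hr : residue_map v r)
  (c : 'I_4 -> 'I_4 -> K) (x : 'I_4 -> K) :
  reduces_in_x34 v c -> (forall i, integral v (x i)) -> qform c x = 0 ->
  r (c i2 i2) * r (x i2) ^+ 2 + r (c i2 i3) * r (x i2) * r (x i3)
  + r (c i3 i3) * r (x i3) ^+ 2 = 0.
Proof.
move=> hc hx E.
have hc' : forall i j : 'I_4, (i <= j)%N -> integral v (c i j) by move=> i j /hc [].
have z (i j : 'I_4) : (i <= j)%N -> (i < 2)%N -> r (c i j) = 0.
  by move=> ij j2; have [ic /(_ j2) h] := hc i j ij; exact: (r_zero hr ic h).
transitivity (r (qform c x)); last by rewrite E (r0 hr).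
rewrite (rq hv hr hc' hx) (z i0 i0) // (z i0 i1) // (z i0 i2) // (z i0 i3) //.
rewrite (z i1 i1) // (z i1 i2) // (z i1 i3) //; ring.
Qed.

Lemma pair_core (hL : exists (L : closedFieldType) (r : K -> L), residue_map v r)
  (pi : K) (hpi : veq v pi 1) (c1 c2 : 'I_4 -> 'I_4 -> K) :
  critical_pair v pi c1 c2 -> ~ pair_has_point c1 c2.
Proof.
move=> [[h1 h2 nc12] [h1' h2' nc34]] [x [[k xk] [E1 E2]]].
have hs : has (fun y => y != 0) [:: x i0; x i1; x i2; x i3].
  apply/hasP; exists (x k) => //.
  by case: (ord4_cases k) => ->; rewrite !inE eqxx ?orbT.
have [c [c0 [[t ts ht] hall]]] := scaling hv hs.
pose x' := fun i => c * x i.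
have ix' : forall i, integral v (x' i).
  by move=> i; apply: hall; case: (ord4_cases i) => ->; rewrite !inE eqxx ?orbT.
have qs (cc : 'I_4 -> 'I_4 -> K) : qform cc x' = c ^+ 2 * qform cc x.
  by rewrite !qformE /x'; ring.
have E1' : qform c1 x' = 0 by rewrite qs E1 mulr0.
have E2' : qform c2 x' = 0 by rewrite qs E2 mulr0.
have [L [r hr]] := hL.
have [hA|hB] := boolP ((r (x' i0) != 0) || (r (x' i1) != 0)).
  have nc := nc12 L r hr (r (x' i0)) (r (x' i1)).
  apply: nc; first by rewrite xpair_eqE negb_and.
  split; [exact: (red12 hr h1 ix' E1')|exact: (red12 hr h2 ix' E2')].
have [z0 z1] : r (x' i0) = 0 /\ r (x' i1) = 0.
  by move: hB; rewrite negb_or !negbK => /andP[/eqP -> /eqP ->].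
have v0 := r_eq0 hr (ix' i0) z0.
have v1 := r_eq0 hr (ix' i1) z1.
have hu : veq v (x' i2) 0 \/ veq v (x' i3) 0.
  move: ts; rewrite !inE => /or4P[] /eqP et; rewrite et in ht.
  - by have := veq_nvge ht v0; lia.
  - by have := veq_nvge ht v1; lia.
  - by left.
  - by right.
have pi0 : pi != 0 by case: hpi.
have vpi : vge v (pi^-1) (-1) by right; rewrite vV // (proj2 hpi).
pose y := fun i : 'I_4 => if (i < 2)%N then x' i / pi else x' i.
have y0 : y i0 = x' i0 / pi by [].
have y1 : y i1 = x' i1 / pi by [].
have y2 : y i2 = x' i2 by [].
have y3 : y i3 = x' i3 by [].
have iy : forall i, integral v (y i).
  move=> i; case: (ord4_cases i) => ->; rewrite ?y0 ?y1 ?y2 ?y3 //; rewrite /integral.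
    by eapply vgeM'; [exact hv|exact v0|exact vpi|lia].
  by eapply vgeM'; [exact hv|exact v1|exact vpi|lia].
have qR (cc : 'I_4 -> 'I_4 -> K) : qform (Rcoef pi cc) y = qform cc x' / pi.
  rewrite !qformE y0 y1 y2 y3 /Rcoef /=.
  by field.
have F1 : qform (Rcoef pi c1) y = 0 by rewrite qR E1' mul0r.
have F2 : qform (Rcoef pi c2) y = 0 by rewrite qR E2' mul0r.
have nc := nc34 L r hr (r (y i2)) (r (y i3)).
apply: nc.
  rewrite y2 y3 xpair_eqE negb_and.
  by case: hu => h; rewrite (r_neq0 hr h) ?orbT.
by split; [exact: (red34 hr h1' iy F1)|exact: (red34 hr h2' iy F2)].
Qed.

End PC2.


Lemma quartic_main (K : fieldType) (v : K -> int) (hv : is_normalised_discrete_valuation v)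
  (l m n a b c d e : K) :
  critical_quartic v l m n a b c d e -> ~ quartic_has_point l m n a b c d e.
Proof.
move=> hc [x [z [y [nz E]]]].
have hs : has (fun w => w != 0) [:: x; z].
  have [x0|x0] := eqVneq x 0; last by apply/hasP; exists x; rewrite ?inE ?eqxx.
  have [z0|z0] := eqVneq z 0; last by apply/hasP; exists z; rewrite ?inE ?eqxx ?orbT.
  exfalso; move: E; rewrite x0 z0 !expr0n /= ?mulr0 ?mul0r ?addr0 => /eqP.
  rewrite mul0r addr0 sqrf_eq0 => /eqP y0.
  by move: nz; rewrite x0 z0 y0 eqxx.
have [k [k0 [[t ts ht] hall]]] := scaling hv hs.
have ix : integral v (k * x) by apply: hall; rewrite !inE eqxx.
have iz : integral v (k * z) by apply: hall; rewrite !inE eqxx ?orbT.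
apply: (quartic_core hv (y := k ^+ 2 * y) hc ix iz).
  by move: ts; rewrite !inE => /orP[] /eqP et; rewrite et in ht; [left|right].
have -> : (k ^+ 2 * y) ^+ 2 + (l * (k * x) ^+ 2 + m * (k * x) * (k * z) + n * (k * z) ^+ 2) * (k ^+ 2 * y)
  = k ^+ 4 * (y ^+ 2 + (l * x ^+ 2 + m * x * z + n * z ^+ 2) * y) by ring.
rewrite E; ring.
Qed.

Lemma cubic_main (K : fieldType) (v : K -> int) (hv : is_normalised_discrete_valuation v)
  (c300 c210 c120 c030 c201 c111 c021 c102 c012 c003 : K) :
  critical_cubic v c300 c210 c120 c030 c201 c111 c021 c102 c012 c003 ->
  ~ cubic_has_point c300 c210 c120 c030 c201 c111 c021 c102 c012 c003.
Proof.
move=> hc [x [y [z [nz E]]]].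
have hs : has (fun w => w != 0) [:: x; y; z].
  have [x0|x0] := eqVneq x 0; last by apply/hasP; exists x; rewrite ?inE ?eqxx.
  have [y0|y0] := eqVneq y 0; last by apply/hasP; exists y; rewrite ?inE ?eqxx ?orbT.
  have [z0|z0] := eqVneq z 0; last by apply/hasP; exists z; rewrite ?inE ?eqxx ?orbT.
  by move: nz; rewrite x0 y0 z0 eqxx.
have [k [k0 [[t ts ht] hall]]] := scaling hv hs.
have ix : integral v (k * x) by apply: hall; rewrite !inE eqxx.
have iy : integral v (k * y) by apply: hall; rewrite !inE eqxx ?orbT.
have iz : integral v (k * z) by apply: hall; rewrite !inE eqxx ?orbT.
apply: (cubic_core hv hc ix iy iz).
  by move: ts; rewrite !inE => /or3P[] /eqP et; rewrite et in ht; [apply: Or31|apply: Or32|apply: Or33].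
have -> : cubic_eval c300 c210 c120 c030 c201 c111 c021 c102 c012 c003 (k * x) (k * y) (k * z)
  = k ^+ 3 * cubic_eval c300 c210 c120 c030 c201 c111 c021 c102 c012 c003 x y z
  by rewrite /cubic_eval; ring.
by rewrite E mulr0.
Qed.


Local Open Scope quotient_scope.

Section Res.
Variable K : fieldType.
Variable v : K -> int.
Hypothesis hv : is_normalised_discrete_valuation v.

Definition intp : {pred K} := fun x => `[< integral v x >].

Lemma intpE x : (x \in intp) = `[< integral v x >]. Proof. by []. Qed.

Lemma intp_subring : subring_closed intp.
Proof.
split.
- by apply/asboolP; right; rewrite (v1 hv).
- move=> x y /asboolP hx /asboolP hy; apply/asboolP.
  by have := vgeB hv hx hy.
- move=> x y /asboolP hx /asboolP hy; apply/asboolP.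
  by have := vgeM hv hx hy; rewrite addr0.
Qed.

HB.instance Definition _ := GRing.isSubringClosed.Build K intp intp_subring.

Record O := MkO { oval : K; oP : oval \in intp }.
HB.instance Definition _ := [isSub for oval].
HB.instance Definition _ := [Choice of O by <:].
HB.instance Definition _ := [SubChoice_isSubComNzRing of O by <:].

Lemma ovalD (a b : O) : oval (a + b) = oval a + oval b. Proof. by []. Qed.
Lemma ovalM (a b : O) : oval (a * b) = oval a * oval b. Proof. by []. Qed.
Lemma oval1 : oval 1 = 1. Proof. by []. Qed.
Lemma oval0 : oval 0 = 0. Proof. by []. Qed.
Lemma ovalN (a : O) : oval (- a) = - oval a. Proof. by []. Qed.
Lemma ovalI (a : O) : integral v (oval a). Proof. exact/asboolP/oP. Qed.

Definition mI : {pred O} := fun x => `[< vge v (oval x) 1 >].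

Lemma mI_ideal : idealr_closed mI.
Proof.
split.
- by apply/asboolP; rewrite oval0; left.
- apply/negP => /asboolP; rewrite oval1 => h.
  by have := veq_nvge (x := 1) (n := 0) (conj (oner_neq0 K) (v1 hv)) h.
- move=> a u w /asboolP hu /asboolP hw; apply/asboolP.
  rewrite ovalD ovalM; apply: (vgeD hv) => //.
  by have := vgeM hv (ovalI a) hu; rewrite add0r.
Qed.

HB.instance Definition _ := isIdealr.Build O mI mI_ideal.

Definition kq := {ideal_quot mI}.

Definition oinv (x : O) : O := insubd 0 (oval x)^-1.

Definition kinv (z : kq) : kq := \pi_kq (oinv (repr z)).

Lemma kpi_eq0 (x : O) : (\pi_kq x == 0) = (x \in mI).
Proof. by rewrite -(rmorph0 (\pi_kq)) -Quotient.idealrBE subr0. Qed.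

Lemma kmulVf (z : kq) : z != 0 -> kinv z * z = 1.
Proof.
rewrite -[z]reprK kpi_eq0 => hz; rewrite /kinv reprK.
set x := repr z in hz *.
have ix := ovalI x.
have hx : veq v (oval x) 0.
  case: (integral_dich ix) => // h; by case/negP: hz; apply/asboolP.
have ii : (oval x)^-1 \in intp.
  apply/asboolP; right; rewrite vV //; first by rewrite (proj2 hx) oppr0.
  exact: (proj1 hx).
have ez : z = \pi_kq x by rewrite /x reprK.
rewrite {1}ez -rmorphM -(rmorph1 (\pi_kq)); congr (\pi _).
apply: val_inj; change (oval (oinv x * x) = oval 1).
rewrite ovalM oval1 /oinv insubdK // mulVf //.
exact: (proj1 hx).
Qed.

Lemma kinv0 : kinv 0 = 0.
Proof.
rewrite /kinv; apply/eqP; rewrite kpi_eq0.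
have : repr (0 : kq) \in mI by rewrite -kpi_eq0 reprK.
set x := repr _ => /asboolP hx.
rewrite /oinv; case: (boolP ((oval x)^-1 \in intp)) => [ii|ni]; last first.
  by rewrite /insubd insubN //; apply/asboolP; rewrite oval0; left.
rewrite /mI; apply/asboolP; rewrite insubdK //.
have [x0|x0] := eqVneq (oval x) 0; first by rewrite x0 invr0; left.
move/asboolP: ii => [i0|i0]; first by left.
case: hx => [h|h]; first by rewrite h eqxx in x0.
by move: i0; rewrite vV //; lia.
Qed.

Definition k : Type := kq.
HB.instance Definition _ := GRing.ComNzRing.on k.
HB.instance Definition _ := GRing.ComNzRing_isField.Build k kmulVf kinv0.

Definition rho (x : K) : k := \pi_kq (insubd 0 x).

Lemma rhoD x y : integral v x -> integral v y -> rho (x + y) = rho x + rho y.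
Proof.
move=> hx hy; rewrite /rho -rmorphD; congr (\pi _); apply: val_inj.
change (oval (insubd 0 (x + y)) = oval (insubd 0 x + insubd 0 y)).
rewrite ovalD !insubdK //; try by apply/asboolP.
by apply/asboolP; apply: vgeD.
Qed.

Lemma rhoM x y : integral v x -> integral v y -> rho (x * y) = rho x * rho y.
Proof.
move=> hx hy; rewrite /rho -rmorphM; congr (\pi _); apply: val_inj.
change (oval (insubd 0 (x * y)) = oval (insubd 0 x * insubd 0 y)).
rewrite ovalM !insubdK //; try by apply/asboolP.
by apply/asboolP; have := vgeM hv hx hy; rewrite addr0.
Qed.

Lemma rho1 : rho 1 = 1.
Proof.
rewrite /rho -(rmorph1 (\pi_kq)); congr (\pi _); apply: val_inj.
change (oval (insubd 0 1) = oval 1).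
by rewrite insubdK //; apply: rpred1.
Qed.

Lemma rho_eq0 x : integral v x -> (rho x = 0 <-> vge v x 1).
Proof.
move=> hx; rewrite /rho; split.
  by move/eqP; rewrite kpi_eq0 => /asboolP; rewrite insubdK //; apply/asboolP.
by move=> h; apply/eqP; rewrite kpi_eq0; apply/asboolP; rewrite insubdK //; apply/asboolP.
Qed.

End Res.

Local Close Scope quotient_scope.

Inductive tm := TV of nat | T0 | T1 | TA of tm & tm | TN of tm | TM of tm & tm | TI of tm.

Fixpoint tm_enc (t : tm) : GenTree.tree nat :=
  match t with
  | TV n => GenTree.Leaf n
  | T0 => GenTree.Node 0 [::]
  | T1 => GenTree.Node 1 [::]
  | TA a b => GenTree.Node 2 [:: tm_enc a; tm_enc b]
  | TN a => GenTree.Node 3 [:: tm_enc a]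
  | TM a b => GenTree.Node 4 [:: tm_enc a; tm_enc b]
  | TI a => GenTree.Node 5 [:: tm_enc a]
  end.

Fixpoint tm_dec (t : GenTree.tree nat) : option tm :=
  match t with
  | GenTree.Leaf n => Some (TV n)
  | GenTree.Node 0 [::] => Some T0
  | GenTree.Node 1 [::] => Some T1
  | GenTree.Node 2 [:: a; b] =>
      match tm_dec a, tm_dec b with Some a', Some b' => Some (TA a' b') | _, _ => None end
  | GenTree.Node 3 [:: a] =>
      match tm_dec a with Some a' => Some (TN a') | _ => None end
  | GenTree.Node 4 [:: a; b] =>
      match tm_dec a, tm_dec b with Some a', Some b' => Some (TM a' b') | _, _ => None end
  | GenTree.Node 5 [:: a] =>
      match tm_dec a with Some a' => Some (TI a') | _ => None end
  | _ => None
  end.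

Lemma tm_encK : pcancel tm_enc tm_dec.
Proof. by elim=> //= [a -> b ->|a ->|a -> b ->|a ->]. Qed.

HB.instance Definition _ := Countable.copy tm (pcan_type tm_encK).

Section Sub.
Variable F0 : fieldType.

Fixpoint ev (s : seq F0) (t : tm) : F0 :=
  match t with
  | TV n => nth 0 s n
  | T0 => 0
  | T1 => 1
  | TA a b => ev s a + ev s b
  | TN a => - ev s a
  | TM a b => ev s a * ev s b
  | TI a => (ev s a)^-1
  end.

Definition gen (s : seq F0) : {pred F0} := fun x => `[< exists t, ev s t = x >].

Lemma gen_divring s : divring_closed (gen s).
Proof.
split.
- by apply/asboolP; exists T1.
- move=> x y /asboolP[a <-] /asboolP[b <-]; apply/asboolP.
  by exists (TA a (TN b)).
- move=> x y /asboolP[a <-] /asboolP[b <-]; apply/asboolP.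
  by exists (TM a (TI b)).
Qed.

HB.instance Definition _ s := GRing.isDivringClosed.Build F0 (gen s) (gen_divring s).

Record FS (s : seq F0) := MkFS { fsval : F0; fsP : fsval \in gen s }.

Section FSinst.
Variable s : seq F0.
HB.instance Definition _ := [isSub for @fsval s].
HB.instance Definition _ := [Choice of FS s by <:].

Lemma fs_ex (x : FS s) : exists t, ev s t == fsval x.
Proof. by have /asboolP[t et] := fsP x; exists t; rewrite et. Qed.

Definition fs_code (x : FS s) : tm := xchoose (fs_ex x).
Definition fs_decode (t : tm) : option (FS s) := insub (ev s t).

Lemma fs_codeK : pcancel fs_code fs_decode.
Proof.
move=> x; rewrite /fs_decode /fs_code; have /eqP -> := xchooseP (fs_ex x).
by rewrite valK.
Qed.

HB.instance Definition _ := PCanIsCountable fs_codeK.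
HB.instance Definition _ := [SubChoice_isSubIntegralDomain of FS s by <:].
HB.instance Definition _ := [SubIntegralDomain_isSubField of FS s by <:].
End FSinst.

Definition FSc (s : seq F0) : countFieldType := FS s.

Definition Lc (s : seq F0) : countClosedFieldType :=
  projT1 (countable_algebraic_closure (FSc s)).
Definition iota (s : seq F0) : {rmorphism FSc s -> Lc s} :=
  sval (projT2 (countable_algebraic_closure (FSc s))).

Lemma mem_gen (s : seq F0) x : x \in s -> x \in gen s.
Proof. by move=> xs; apply/asboolP; exists (TV (index x s)); rewrite /= nth_index. Qed.

Definition compL (s : seq F0) (a : F0) : Lc s :=
  if insub a is Some y then iota s y else 0.

Lemma compE (s : seq F0) a (h : a \in gen s) : compL s a = iota s (Sub a h).
Proof. by rewrite /compL insubT. Qed.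

Lemma compD (s : seq F0) a b : a \in gen s -> b \in gen s ->
  compL s (a + b) = compL s a + compL s b.
Proof.
move=> ha hb; have hab : a + b \in gen s by rewrite rpredD.
rewrite (compE hab) (compE ha) (compE hb) -rmorphD; congr (iota s _).
by apply: val_inj.
Qed.

Lemma compM (s : seq F0) a b : a \in gen s -> b \in gen s ->
  compL s (a * b) = compL s a * compL s b.
Proof.
move=> ha hb; have hab : a * b \in gen s by rewrite rpredM.
rewrite (compE hab) (compE ha) (compE hb) -rmorphM; congr (iota s _).
by apply: val_inj.
Qed.

Lemma comp1 (s : seq F0) : compL s 1 = 1.
Proof.
rewrite (compE (rpred1 (gen s))) -(rmorph1 (iota s)); congr (iota s _).
by apply: val_inj.
Qed.

Lemma comp0 (s : seq F0) : compL s 0 = 0.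
Proof.
rewrite (compE (rpred0 (gen s))) -(rmorph0 (iota s)); congr (iota s _).
by apply: val_inj.
Qed.

Lemma comp_eq0 (s : seq F0) a : a \in gen s -> compL s a = 0 -> a = 0.
Proof.
move=> ha; rewrite (compE ha) => /eqP; rewrite fmorph_eq0 => /eqP h.
by have := congr1 val h.
Qed.

End Sub.


Local Open Scope quotient_scope.

Section Ultra.
Variable I : Type.
Variable Lf : I -> closedFieldType.
Variable U : (I -> Prop) -> Prop.
Hypothesis UT : U (fun _ => True).
Hypothesis UI : forall A B, U A -> U B -> U (fun i => A i /\ B i).
Hypothesis US : forall (A B : I -> Prop), (forall i, A i -> B i) -> U A -> U B.
Hypothesis Uex : forall A, U A -> exists i, A i.
Hypothesis Uultra : forall A, U A \/ U (fun i => ~ A i).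

Record Pi := MkPi { pf : forall i, Lf i }.
HB.instance Definition _ := gen_eqMixin Pi.
HB.instance Definition _ := gen_choiceMixin Pi.

Lemma Pi_ext (f g : Pi) : (forall i, pf f i = pf g i) -> f = g.
Proof.
case: f => f; case: g => g /= h; congr MkPi.
exact: functional_extensionality_dep.
Qed.

Definition p0 := MkPi (fun i => 0).
Definition p1 := MkPi (fun i => 1).
Definition padd (f g : Pi) := MkPi (fun i => pf f i + pf g i).
Definition popp (f : Pi) := MkPi (fun i => - pf f i).
Definition pmul (f g : Pi) := MkPi (fun i => pf f i * pf g i).

Lemma paddA : associative padd.
Proof. by move=> f g h; apply: Pi_ext => i /=; rewrite addrA. Qed.
Lemma paddC : commutative padd.
Proof. by move=> f g; apply: Pi_ext => i /=; rewrite addrC. Qed.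
Lemma padd0 : left_id p0 padd.
Proof. by move=> f; apply: Pi_ext => i /=; rewrite add0r. Qed.
Lemma paddN : left_inverse p0 popp padd.
Proof. by move=> f; apply: Pi_ext => i /=; rewrite addNr. Qed.

HB.instance Definition _ := GRing.isZmodule.Build Pi paddA paddC padd0 paddN.

Lemma pmulA : associative pmul.
Proof. by move=> f g h; apply: Pi_ext => i /=; rewrite mulrA. Qed.
Lemma pmulC : commutative pmul.
Proof. by move=> f g; apply: Pi_ext => i /=; rewrite mulrC. Qed.
Lemma pmul1 : left_id p1 pmul.
Proof. by move=> f; apply: Pi_ext => i /=; rewrite mul1r. Qed.
Lemma pmulD : left_distributive pmul +%R.
Proof. by move=> f g h; apply: Pi_ext => i /=; rewrite mulrDl. Qed.
Lemma p1_neq0 : p1 != 0.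
Proof.
have [i _] := Uex UT; apply/eqP => /(congr1 (fun f => pf f i)) /= /eqP.
by rewrite oner_eq0.
Qed.

HB.instance Definition _ := GRing.Zmodule_isComNzRing.Build Pi pmulA pmulC pmul1 pmulD p1_neq0.

Definition evi (i : I) (f : Pi) : Lf i := pf f i.
Lemma evi_zmod i : zmod_morphism (evi i).
Proof. by move=> f g. Qed.
Lemma evi_monoid i : monoid_morphism (evi i).
Proof. by split. Qed.
HB.instance Definition _ i := GRing.isZmodMorphism.Build Pi (Lf i) (evi i) (evi_zmod i).
HB.instance Definition _ i := GRing.isMonoidMorphism.Build Pi (Lf i) (evi i) (evi_monoid i).

Definition NI : {pred Pi} := fun f => `[< U (fun i => pf f i = 0) >].

Lemma NI_ideal : idealr_closed NI.
Proof.
split.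
- by apply/asboolP; apply: US UT.
- apply/negP => /asboolP /Uex [i] /= /eqP; by rewrite oner_eq0.
- move=> a u w /asboolP hu /asboolP hw; apply/asboolP.
  apply: US (UI hu hw) => i /= [-> ->]; by rewrite mulr0 addr0.
Qed.

HB.instance Definition _ := isIdealr.Build Pi NI NI_ideal.

Definition Pq := {ideal_quot NI}.

Lemma ppi_eq (f g : Pi) : \pi_Pq f = \pi_Pq g <-> U (fun i => pf f i = pf g i).
Proof.
split.
  move/eqP; rewrite -Quotient.idealrBE => /asboolP; apply: US => i /= /eqP.
  by rewrite subr_eq0 => /eqP.
move=> h; apply/eqP; rewrite -Quotient.idealrBE; apply/asboolP.
by apply: US h => i /= ->; rewrite subrr.
Qed.

Lemma ppi_eq0 (f : Pi) : \pi_Pq f = 0 <-> U (fun i => pf f i = 0).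
Proof. by rewrite -(rmorph0 (\pi_Pq)) ppi_eq. Qed.

Definition pinv (f : Pi) := MkPi (fun i => (pf f i)^-1).
Definition Pinv (z : Pq) : Pq := \pi_Pq (pinv (repr z)).

Lemma PmulVf (z : Pq) : z != 0 -> Pinv z * z = 1.
Proof.
move=> nz; have ez : z = \pi_Pq (repr z) by rewrite reprK.
rewrite /Pinv {2}ez -rmorphM -(rmorph1 (\pi_Pq)); apply/ppi_eq.
have : ~ U (fun i => pf (repr z) i = 0) by move/ppi_eq0; rewrite -ez; apply/eqP.
case: (Uultra (fun i => pf (repr z) i = 0)) => // h _.
apply: US h => i /= /eqP h; by rewrite mulVf.
Qed.

Lemma Pinv0 : Pinv 0 = 0.
Proof.
rewrite /Pinv; apply/ppi_eq0.
have : \pi_Pq (repr (0 : Pq)) = 0 by rewrite reprK.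
move/ppi_eq0; apply: US => i /= ->; by rewrite invr0.
Qed.

Definition P : Type := let _ := Uultra in Pq.
HB.instance Definition _ := GRing.ComNzRing.on P.
HB.instance Definition _ := GRing.ComNzRing_isField.Build P PmulVf Pinv0.

Lemma P_closed : GRing.closed_field_axiom P.
Proof.
move=> n Pc hn.
pose ex i := solve_monicpoly (fun j => pf (repr (Pc j)) i) hn.
pose W := MkPi (fun i => proj1_sig (cid (ex i))).
exists (\pi_Pq W).
have -> : \sum_(j < n) Pc j * \pi_Pq W ^+ j = \pi_Pq (\sum_(j < n) repr (Pc j) * W ^+ j).
  rewrite rmorph_sum; apply: eq_bigr => j _; rewrite rmorphM rmorphXn; congr (_ * _); exact/esym/reprK.
rewrite -rmorphXn; congr (\pi _); apply: Pi_ext => i.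
have -> : pf (W ^+ n) i = evi i (W ^+ n) by [].
have -> : pf (\sum_(j < n) repr (Pc j) * W ^+ j) i = evi i (\sum_(j < n) repr (Pc j) * W ^+ j) by [].
rewrite rmorphXn rmorph_sum /= (proj2_sig (cid (ex i))).
by apply: eq_bigr => j _; congr (_ * _); symmetry; exact: (rmorphXn (evi i) j W).
Qed.

HB.instance Definition _ := Field_isAlgClosed.Build P P_closed.

Definition toP (f : Pi) : P := \pi_Pq f.

Lemma toP_eq f g : toP f = toP g <-> U (fun i => pf f i = pf g i).
Proof. exact: ppi_eq. Qed.
Lemma toP_eq0 f : toP f = 0 <-> U (fun i => pf f i = 0).
Proof. exact: ppi_eq0. Qed.
Lemma toPD f g : toP (f + g) = toP f + toP g.
Proof. exact: rmorphD. Qed.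
Lemma toPM f g : toP (f * g) = toP f * toP g.
Proof. exact: rmorphM. Qed.
Lemma toP1 : toP 1 = 1.
Proof. exact: rmorph1. Qed.

End Ultra.

Local Close Scope quotient_scope.

Lemma exists_ultra (T : eqType) : exists U : (seq T -> Prop) -> Prop,
  [/\ U (fun _ => True),
      (forall A B, U A -> U B -> U (fun i => A i /\ B i)),
      (forall (A B : seq T -> Prop), (forall i, A i -> B i) -> U A -> U B),
      (forall A, U A -> exists i, A i) &
      (forall A, U A \/ U (fun i => ~ A i))] /\
  (forall s0 : seq T, U (fun s => {subset s0 <= s})).
Proof.
pose B : set_system (seq T) := fun A => exists s0 : seq T, forall s, {subset s0 <= s} -> A s.
have FB : Filter B.
  split.
  - by exists [::].
  - move=> A1 A2 [s1 h1] [s2 h2]; exists (s1 ++ s2) => s hs; split.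
      by apply: h1 => x xs; apply: hs; rewrite mem_cat xs.
    by apply: h2 => x xs; apply: hs; rewrite mem_cat xs orbT.
  - by move=> A1 A2 sub [s0 h]; exists s0 => s /h /sub.
have PB : ProperFilter B.
  apply: Build_ProperFilter_ex => // A [s0 h]; exists s0; exact: h.
have [G [UG sBG]] := ultraFilterLemma PB.
have FG : ProperFilter G by case: UG.
exists G; split; last by move=> s0; apply: sBG; exists s0.
split.
- exact: (@filterT _ G).
- by move=> A1 A2 h1 h2; exact: (filterI h1 h2).
- by move=> A1 A2 sub h; exact: (filterS sub h).
- by move=> A h; exact: (filter_ex h).
- by move=> A; exact: (in_ultra_setVsetC A UG).
Qed.

Section Clos.
Variable K : fieldType.
Variable v : K -> int.
Hypothesis hv : is_normalised_discrete_valuation v.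

Lemma residue_closure : exists (L : closedFieldType) (r : K -> L), residue_map v r.
Proof.
have [U [[UT UI US Uex Uultra] Ubase]] := exists_ultra (k hv).
pose Lf := fun s : seq (k hv) => (Lc s : closedFieldType).
pose LL : closedFieldType := P Lf UT UI US Uex Uultra.
pose r := fun x : K => (toP UT UI US Uex Uultra (MkPi (fun s : seq (k hv) => compL s (rho hv x))) : LL).
exists LL, r; split.
- move=> x y hx hy; rewrite /r -toPD; apply/toP_eq.
  apply: (US _ _ _ (Ubase [:: rho hv x; rho hv y])) => s hs /=.
  have gx : rho hv x \in gen s by apply: mem_gen; apply: hs; rewrite !inE eqxx.
  have gy : rho hv y \in gen s by apply: mem_gen; apply: hs; rewrite !inE eqxx ?orbT.
  by rewrite rhoD // compD.
- move=> x y hx hy; rewrite /r -toPM; apply/toP_eq.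
  apply: (US _ _ _ (Ubase [:: rho hv x; rho hv y])) => s hs /=.
  have gx : rho hv x \in gen s by apply: mem_gen; apply: hs; rewrite !inE eqxx.
  have gy : rho hv y \in gen s by apply: mem_gen; apply: hs; rewrite !inE eqxx ?orbT.
  by rewrite rhoM // compM.
- rewrite /r -(toP1 Lf UT UI US Uex Uultra); apply/toP_eq.
  by apply: (US _ _ _ UT) => s _ /=; rewrite rho1 comp1.
- move=> x hx; split.
    move/toP_eq0 => h.
    have [s [hs0 hs1]] := Uex _ (UI _ _ h (Ubase [:: rho hv x])).
    have gx : rho hv x \in gen s by apply: mem_gen; apply: hs1; rewrite !inE eqxx.
    by apply/(rho_eq0 hv hx); apply: comp_eq0 gx hs0.
  move/(rho_eq0 hv hx) => h0; apply/toP_eq0.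
  by apply: (US _ _ _ UT) => s _ /=; rewrite h0 comp0.
Qed.

End Clos.


Unset Implicit Arguments.

Theorem lemma5p2 (K : fieldType) (v : K -> int)
  (hv : is_normalised_discrete_valuation v)
  (pi : K) (hpi : veq v pi 1)
  (hperf : perfect_residue_field v) :
  [/\ (forall l m n a b c d e : K,
         critical_quartic v l m n a b c d e -> ~ quartic_has_point l m n a b c d e),
      (forall c300 c210 c120 c030 c201 c111 c021 c102 c012 c003 : K,
         critical_cubic v c300 c210 c120 c030 c201 c111 c021 c102 c012 c003 ->
         ~ cubic_has_point c300 c210 c120 c030 c201 c111 c021 c102 c012 c003)
    & (forall c1 c2 : 'I_4 -> 'I_4 -> K,
         critical_pair v pi c1 c2 -> ~ pair_has_point c1 c2)].
Proof.
split.
- exact: (quartic_main hv).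
- exact: (cubic_main hv).
- move=> c1 c2; apply: (pair_core hv _ hpi).
  exact: (residue_closure hv).
Qed.
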